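(* Let $\mathcal{C}\subseteq\mathbb{F}_q^n$ be a linear code of dimension $k\ge1$ and minimum distance $d\ge2$, and $J=n-k-d+2$. Let $\mathbf{h}_1,\dots,\mathbf{h}_m\in\mathcal{C}^\perp$ be linearly independent with $m>J$, and let $\mathcal{S}_j=\operatorname{supp}(\mathbf{h}_j)$. Assume $\mathcal{S}_1,\dots,\mathcal{S}_J$ are pairwise disjoint, let $\mathcal{U}=\mathcal{S}_1\cup\cdots\cup\mathcal{S}_J$ and $\theta=n-|\mathcal{U}|$, and assume $\theta\in[1,d-2]$. For $i\in[J+1,m]$ let $\theta_i=|\mathcal{S}_i\setminus\mathcal{U}|$ and assume $\theta_i\ge1$. Then for every $i\in[J+1,m]$ and every $l\in[1,J]$ with $|\mathcal{S}_l|>\theta_i$, $$|\mathcal{S}_i\cap\mathcal{S}_l|\ \ge\ |\mathcal{S}_l|-\theta_i+\theta-d+2 .$$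
   Context: $\operatorname{supp}(\mathbf{h})=\{l\in[1,n]:h_l\neq0\}$; $\mathcal{C}^\perp$ is the dual code; $[a,b]=\{a,\dots,b\}$. *)

(* Defs.v *)
From HB Require Import structures.
From mathcomp Require Import all_boot all_order all_algebra all_field.
Set Implicit Arguments. Unset Strict Implicit. Unset Printing Implicit Defensive.
Import GRing.Theory Num.Theory.
Local Open Scope ring_scope.

Section Codes.
Variables (F : finFieldType) (n : nat).

Definition supp (h : 'rV[F]_n) : {set 'I_n} := [set l | h 0 l != 0].

Definition wt (h : 'rV[F]_n) : nat := #|supp h|.

Definition dotv (u v : 'rV[F]_n) : F := \sum_(l < n) u 0 l * v 0 l.

Definition in_dual (C : {vspace 'rV[F]_n}) (h : 'rV[F]_n) : Prop :=
  forall c, c \in C -> dotv c h = 0.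

Definition is_min_dist (C : {vspace 'rV[F]_n}) (d : nat) : Prop :=
  (exists2 c, c \in C & (c != 0) && (wt c == d)) /\
  (forall c, c \in C -> c != 0 -> (d <= wt c)%N).

End Codes.

(* Main.v *)
Require Import Defs.
From HB Require Import structures.
From mathcomp Require Import all_boot all_order all_algebra all_field.
From mathcomp Require Import zify.
Import GRing.Theory Num.Theory.
Local Open Scope ring_scope.

Lemma free_fun (F : fieldType) (vT : vectType F) (m : nat) (h : 'I_m -> vT) :
  free [seq h i | i <- enum 'I_m] ->
  forall c : 'I_m -> F, \sum_i c i *: h i = 0 -> forall i, c i = 0.
Proof.
move=> hf c hc i.
have hf' : free (map_tuple h (ord_tuple m)).
  by move: hf; rewrite -val_ord_tuple.
move/freeP: hf' => /(_ c); apply => //.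
rewrite -[RHS]hc; apply: eq_bigr => j _.
by rewrite -tnth_nth tnth_map tnth_ord_tuple.
Qed.

Lemma sub_card (T : finType) (A : {set T}) (k : nat) :
  (k <= #|A|)%N -> exists2 B : {set T}, B \subset A & #|B| = k.
Proof.
move/card_geqP => [s [us ss sA]].
exists [set x in s]; first by apply/subsetP => x; rewrite inE => /sA.
by rewrite cardsE -ss; apply/card_uniqP.
Qed.
Theorem lemma5 (F : finFieldType) (n k d m : nat)
  (C : {vspace 'rV[F]_n}) (h : 'I_m -> 'rV[F]_n)
  (hk : (1 <= k)%N) (hdimC : \dim C = k)
  (hd2 : (2 <= d)%N) (hd : is_min_dist C d)
  (hdual : forall i, in_dual C (h i))
  (hfree : free [seq h i | i <- enum 'I_m])
  (hmJ : ((n + 2) - (k + d) < m)%N)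
  (hdisj : forall j1 j2 : 'I_m, (j1 < (n + 2) - (k + d))%N ->
             (j2 < (n + 2) - (k + d))%N -> j1 != j2 ->
             [disjoint supp (h j1) & supp (h j2)])
  (htheta : let U := \bigcup_(j : 'I_m | (j < (n + 2) - (k + d))%N) supp (h j) in
            (1 <= n - #|U|)%N && (n - #|U| <= d - 2)%N)
  (hthetai : forall i : 'I_m, ((n + 2) - (k + d) <= i)%N ->
             let U := \bigcup_(j : 'I_m | (j < (n + 2) - (k + d))%N) supp (h j) in
             (1 <= #|supp (h i) :\: U|)%N) :
  let J := ((n + 2) - (k + d))%N in
  let U := \bigcup_(j : 'I_m | (j < J)%N) supp (h j) in
  let theta := (n - #|U|)%N in
  forall i l : 'I_m, (J <= i)%N -> (l < J)%N ->
    let theta_i := #|supp (h i) :\: U| in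
    (theta_i < #|supp (h l)|)%N ->
    (#|supp (h l)|%:Z - theta_i%:Z + theta%:Z - d%:Z + 2 <=
       #|supp (h i) :&: supp (h l)|%:Z)%R.
Proof.
move=> J U theta i l hi hl thi hlt.
rewrite Order.TotalTheory.leNgt; apply/negP => Hlt.
have key : (#|supp (h i) :&: supp (h l)| + thi + d < #|supp (h l)| + theta + 2)%N.
  by move: Hlt; rewrite /theta; lia.
have hJ : (J + k + d = n + 2)%N by rewrite /J; lia.
have hJm : (J <= m)%N by apply: ltnW.
have hUn : (#|U| <= n)%N by have := max_card (mem U); rewrite card_ord.
have hsub : forall j : 'I_m, (j < J)%N -> supp (h j) \subset U.
  by move=> j hj; apply: (bigcup_sup j).
set Si := supp (h i); set Sl := supp (h l).
set T0 := (~: U :|: Sl) :\: Si.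
have hT0 : (d - 1 <= #|T0|)%N.
  have e1 : #|~: U :|: Sl| = (#|~: U| + #|Sl|)%N.
    rewrite -cardsUI.
    suff -> : ~: U :&: Sl = set0 by rewrite cards0 addn0.
    apply/setP => t; rewrite in_setI in_setC in_set0; apply/negP => /andP [tU tS].
    by move/subsetP: (hsub l hl) => /(_ t tS); rewrite (negbTE tU).
  have e2 : #|~: U| = (n - #|U|)%N by rewrite cardsCs setCK card_ord.
  have e3 := cardsID Si (~: U :|: Sl).
  have e4 : (#|(~: U :|: Sl) :&: Si| <= thi + #|Si :&: Sl|)%N.
    apply: (@leq_trans #|(Si :\: U) :|: (Si :&: Sl)|); last first.
      by rewrite cardsU leq_subr.
    apply: subset_leq_card; apply/subsetP => t; rewrite !(in_setI, in_setU, in_setD, in_setC).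
    by case: (t \in U); case: (t \in Sl); case: (t \in Si).
  move: key e1 e2 e3 e4; rewrite /theta /T0 /Si /Sl; lia.
have [T sT cT] := @sub_card _ _ _ hT0.
pose sig (a : 'I_J) : 'I_m := if val a == val l then i else widen_ord hJm a.
have sig_inj : injective sig.
  move=> a b; rewrite /sig.
  case: eqP => ea; case: eqP => eb => e; apply: val_inj => //=.
  - by rewrite ea eb.
  - by move: (ltn_ord b) hi; rewrite e /=; lia.
  - by move: (ltn_ord a) hi; rewrite -e /=; lia.
  - by move: e => /(congr1 val).
pose hh a := h (sig a).
have hvan : forall a t, t \in T -> hh a 0 t = 0.
  move=> a t tT; move/subsetP: sT => /(_ t tT).
  rewrite /T0 !(in_setD, in_setU, in_setC) => /andP [tSi tUS].
  rewrite /hh /sig; case: eqP => ea.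
    by apply/eqP; move: tSi; rewrite /Si inE negbK.
  set a' := widen_ord hJm a.
  have ha' : (a' < J)%N by rewrite /= ltn_ord.
  have hnl : a' != l by apply/eqP => e; apply: ea; rewrite -e.
  apply/eqP; apply: contraTT tUS => ta.
  have ta' : t \in supp (h a') by rewrite inE.
  rewrite negb_or negbK; apply/andP; split.
    by move/subsetP: (hsub a' ha'); apply.
  have := hdisj a' l ha' hl hnl; rewrite disjoint_sym => /disjointFl => /(_ t ta') -> //.
pose H : 'M[F]_(J, n) := \matrix_(a0, t0) hh a0 0 t0.
have rowH : forall a, row a H = hh a.
  by move=> b; apply/rowP => t; rewrite !mxE.
have Hfree : row_free H.
  apply: inj_row_free => v hv.
  pose c (x : 'I_m) := \sum_a (sig a == x)%:R * v 0 a.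
  have hc : \sum_x c x *: h x = 0.
    rewrite mulmx_sum_row in hv; rewrite -[RHS]hv.
    under eq_bigr do rewrite /c scaler_suml.
    rewrite exchange_big /=; apply: eq_bigr => a _.
    rewrite (bigD1 (sig a)) //= eqxx mul1r rowH big1 ?addr0 // => x /negPf nx.
    by rewrite eq_sym nx mul0r scale0r.
  have c0 := @free_fun _ _ _ _ hfree _ hc.
  apply/rowP => a; rewrite mxE; have := c0 (sig a).
  rewrite /c (bigD1 a) //= eqxx mul1r big1 ?addr0 // => b /negPf nb.
  by rewrite (inj_eq sig_inj) nb mul0r.
pose f : 'Hom('rV[F]_n, 'rV[F]_J) := linfun (mulmxr H^T).
pose D : 'M[F]_n := diag_mx (\row_t (t \notin T)%:R).
pose pi : 'Hom('rV[F]_n, 'rV[F]_n) := linfun (mulmxr D).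
have fE x : f x = x *m H^T by rewrite lfunE.
have piE x : pi x = x *m D by rewrite lfunE.
have DH : D *m H^T = H^T.
  apply/matrixP => t a; rewrite mul_diag_mx !mxE.
  case: (boolP (t \in T)) => tT /=; last by rewrite mul1r.
  by rewrite mul0r hvan.
have fpi : (f \o pi)%VF = f.
  by apply/lfunP => x; rewrite comp_lfunE piE !fE -mulmxA DH.
have limgf : limg f = fullv.
  have [B HB] := row_freeP Hfree.
  apply/eqP; rewrite eqEsubv subvf /=; apply/subvP => y _.
  have -> : y = f (y *m B^T) by rewrite fE -mulmxA -trmx_mul HB trmx1 mulmx1.
  by rewrite memv_img ?memvf.
have dimf : \dim (limg f) = J by rewrite limgf dimvf dim_matrix; exact: mul1n.
have dimpi : (\dim (limg pi) <= #|~: T|)%N.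
  apply: (@leq_trans (\dim <<[seq delta_mx 0 t | t <- enum (~: T)]>>)).
    apply: dimvS; apply/subvP => y /memv_imgP [x _ ->].
    rewrite (row_sum_delta (pi x)); apply: rpred_sum => t _.
    rewrite piE mul_mx_diag !mxE; case: (boolP (t \in T)) => tT /=.
      by rewrite mulr0 scale0r rpred0.
    by rewrite mulr1 rpredZ // memv_span // map_f // mem_enum inE tT.
  by rewrite (leq_trans (dim_span _)) // size_map -cardE.
have img_ker : (pi @: C <= limg pi :&: lker f)%VS.
  rewrite subv_cap limgS ?subvf //=; apply/subvP => y /memv_imgP [c cC ->].
  rewrite memv_ker fE piE -mulmxA DH; apply/eqP/rowP => a.
  rewrite mxE [RHS]mxE; under eq_bigr do rewrite !mxE.
  exact: hdual (sig a) c cC.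
have k1 := limg_ker_dim pi C.
have k2 := limg_ker_dim f (limg pi).
rewrite -limg_comp fpi dimf in k2.
have k3 := dimvS img_ker.
have cardT : #|~: T| = (n - (d - 1))%N by rewrite cardsCs setCK card_ord cT.
have pos : (0 < \dim (C :&: lker pi))%N.
  move: k1 k2 k3 dimpi; rewrite cardT hdimC capvC; move: hJ hd2; rewrite /J; set a := \dim _; set b := \dim _; set c := \dim _; set e := \dim _. lia.
have nz : (C :&: lker pi)%VS != 0%VS by rewrite -dimv_eq0 -lt0n.
have cin := memv_pick (C :&: lker pi).
have cnz : vpick (C :&: lker pi) != 0 by rewrite vpick0.
move: cin cnz; set c := vpick _; rewrite memv_cap memv_ker => /andP [cC /eqP cker] cnz.
have w1 : (d <= wt c)%N := hd.2 c cC cnz.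
have w2 : (wt c <= #|T|)%N.
  apply: subset_leq_card; apply/subsetP => t; rewrite inE; apply: contraR => tT.
  apply/eqP.
  have := congr1 (fun y : 'rV[F]_n => y 0 t) cker.
  by rewrite /= piE mul_mx_diag !mxE tT mulr1.
move: w1 w2; rewrite cT; lia.
Qed.
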